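(* Let $G$ and $H$ be finite simple graphs, and let $x$ be a vertex of $G$ and $y$ a vertex of $H$. Then the curvature of the strong product at the vertex $(x,y)$ is the product of the curvatures: $$K_{G*H}(x,y)=K_G(x)\,K_H(y).$$
   Context: All graphs are finite simple graphs. A complete subgraph with $k+1$ vertices has dimension $k$; $f_k(G)$ denotes the number of complete subgraphs of $G$ of dimension $k$, and the simplex generating function is $f_G(t)=1+f_0(G)t+f_1(G)t^2+\cdots+f_d(G)t^{d+1}$ (for the empty graph $f_G(t)=1$). For a vertex $x$ of $G$, the unit sphere $S(x)$ is the subgraph of $G$ induced on the set of vertices adjacent to $x$. The curvature of $G$ at $x$ is $K_G(x)=\int_{-1}^0 f_{S(x)}(s)\,ds = 1-\frac{f_0(S(x))}{2}+\frac{f_1(S(x))}{3}-\frac{f_2(S(x))}{4}+\cdots$. The strong product $G*H$ has vertex set $V(G)\times V(H)$, and two distinct vertices $(a,b),(c,d)$ are adjacent iff ($a=c$ or $a$ is adjacent to $c$ in $G$) and ($b=d$ or $b$ is adjacent to $d$ in $H$). *)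

(* Defs.v *)
From mathcomp Require Import all_boot all_order all_algebra.
Set Implicit Arguments. Unset Strict Implicit. Unset Printing Implicit Defensive.
Import GRing.Theory Num.Theory.
Local Open Scope ring_scope.

Definition simple_graph (T : finType) (e : rel T) : Prop :=
  symmetric e /\ irreflexive e.

Definition is_clique (T : finType) (e : rel T) (A : {set T}) : bool :=
  [forall x in A, forall y in A, (x != y) ==> e x y].

(* f_k(G): number of complete subgraphs of dimension k (k+1 vertices). *)
Definition fk (T : finType) (e : rel T) (k : nat) : nat :=
  #|[set A : {set T} | is_clique e A && (#|A| == k.+1)%N]|.

Definition sphere_rel (T : finType) (e : rel T) (x : T)
  : rel {y : T | e x y} := fun a b => e (val a) (val b).

(* K(G) for the graph itself: int_{-1}^0 f_G(s) ds
   = 1 - f_0/2 + f_1/3 - ...  (complete subgraphs of dimension k have at most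
   #|T| vertices, so k < #|T| covers all nonzero terms). *)
Definition int_simplex_gf (T : finType) (e : rel T) : rat :=
  1 + \sum_(k < #|T|) (-1) ^+ k.+1 * ((fk e k)%:R / (k.+2)%:R).

Definition curvature (T : finType) (e : rel T) (x : T) : rat :=
  @int_simplex_gf {y : T | e x y} (@sphere_rel T e x).

Definition strong_prod (T1 T2 : finType) (e1 : rel T1) (e2 : rel T2)
  : rel (T1 * T2) :=
  fun a b => [&& a != b, (a.1 == b.1) || e1 a.1 b.1 & (a.2 == b.2) || e2 a.2 b.2].

(* Main.v *)
Require Import Defs.
From mathcomp Require Import all_boot all_order all_algebra. From mathcomp Require Import perm.
From mathcomp Require Import ring.
Set Implicit Arguments. Unset Strict Implicit. Unset Printing Implicit Defensive.
Import GRing.Theory Num.Theory.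
Local Open Scope ring_scope.

Lemma sum_subset_sign (T : finType) (X : {set T}) :
  \sum_(Y : {set T} | Y \subset X) (-1 : rat) ^+ #|Y| = (X == set0)%:R.
Proof.
have [->|[x0 Hx0]] := set_0Vmem X.
  rewrite eqxx (big_pred1 set0) ?cards0 ?expr0 // => Y; by rewrite subset0.
have -> : (X == set0) = false by apply/negbTE/set0Pn; exists x0.
rewrite (bigID (fun Y : {set T} => x0 \in Y)) /=.
rewrite (reindex_onto (fun Y => x0 |: Y) (fun Y => Y :\ x0)) /=; last first.
  by move=> Y /andP[_ HY]; rewrite setD1K.
rewrite (eq_bigl (fun Y : {set T} => (Y \subset X) && (x0 \notin Y))); last first.
  move=> Y; rewrite setU11 andbT subUset sub1set Hx0 /=.
  case Hx: (x0 \in Y) => /=; last by rewrite setU1K ?Hx ?eqxx ?andbT.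
  rewrite andbF; apply/negbTE/negP => /andP[_ /eqP HE].
  by have := setD11 x0 (x0 |: Y); rewrite HE Hx.
rewrite -big_split /= big1 // => Y /andP[_ HY].
by rewrite cardsU1 HY exprD expr1 mulN1r addrC subrr.
Qed.

Lemma sum3_swap (I J K : finType) (c1 : pred I) (c2 : I -> pred J) (c3 : I -> pred K)
  (d1 : pred J) (d2 : pred K) (d3 : J -> K -> pred I) (F : I -> J -> K -> rat) :
  (forall i j k, [&& c1 i, c2 i j & c3 i k] = [&& d1 j, d2 k & d3 j k i]) ->
  \sum_(i | c1 i) \sum_(j | c2 i j) \sum_(k | c3 i k) F i j k =
  \sum_(j | d1 j) \sum_(k | d2 k) \sum_(i | d3 j k i) F i j k.
Proof.
move=> H.
have -> : \sum_(i | c1 i) \sum_(j | c2 i j) \sum_(k | c3 i k) F i j k =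
  \sum_i \sum_j \sum_k (if [&& c1 i, c2 i j & c3 i k] then F i j k else 0).
  rewrite big_mkcond; apply: eq_bigr => i _; case: (c1 i) => /=; last first.
    by rewrite big1 // => j _; rewrite big1.
  rewrite big_mkcond; apply: eq_bigr => j _; case: (c2 i j) => /=; last first.
    by rewrite big1.
  by rewrite big_mkcond.
have -> : \sum_(j | d1 j) \sum_(k | d2 k) \sum_(i | d3 j k i) F i j k =
  \sum_j \sum_k \sum_i (if [&& d1 j, d2 k & d3 j k i] then F i j k else 0).
  rewrite big_mkcond; apply: eq_bigr => j _; case: (d1 j) => /=; last first.
    by rewrite big1 // => k _; rewrite big1.
  rewrite big_mkcond; apply: eq_bigr => k _; case: (d2 k) => /=; last first.
    by rewrite big1.
  by rewrite big_mkcond.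
rewrite exchange_big; apply: eq_bigr => j _.
rewrite exchange_big; apply: eq_bigr => k _.
by apply: eq_bigr => i _; rewrite H.
Qed.

Lemma sum_prod2 (I J : finType) (P : pred I) (Q : pred J) (f : I -> rat) (g : J -> rat) :
  \sum_(i | P i) \sum_(j | Q j) f i * g j = (\sum_(i | P i) f i) * (\sum_(j | Q j) g j).
Proof. by rewrite big_distrl; apply: eq_bigr => i _; rewrite big_distrr. Qed.

Lemma sum_subset_top (T : finType) (A : {set T}) :
  \sum_(A' : {set T} | A' \subset A) (-1 : rat) ^+ #|A'| * (A \subset A')%:R = (-1) ^+ #|A|.
Proof.
rewrite (eq_bigr (fun A' : {set T} => if A \subset A' then (-1 : rat) ^+ #|A'| else 0)); last first.
  by move=> A' _; case: (A \subset A'); rewrite ?mulr1 ?mulr0.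
rewrite -big_mkcondr (big_pred1 A) // => A'.
by rewrite /= eq_sym eqEsubset andbC.
Qed.

Lemma setX_eq0 (T1 T2 : finType) (P : {set T1}) (Q : {set T2}) :
  (setX P Q == set0) = (P == set0) || (Q == set0).
Proof. by rewrite -!cards_eq0 cardsX muln_eq0. Qed.

Lemma surj_sum (T1 T2 : finType) (A : {set T1}) (B : {set T2}) :
  A != set0 -> B != set0 ->
  \sum_(C : {set T1 * T2} | (fst @: C == A) && (snd @: C == B)) (-1 : rat) ^+ #|C|
  = - ((-1) ^+ #|A| * (-1) ^+ #|B|).
Proof.
move=> nA nB.
rewrite (eq_bigl (fun C : {set T1 * T2} => (C \subset setX A B) && ((A :\: fst @: C == set0) && (B :\: snd @: C == set0)))); last first.
  move=> C; apply/andP/andP.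
    move=> [/eqP HA /eqP HB]; rewrite -HA -HB !setDv !eqxx; split => //.
    by apply/subsetP => c Hc; rewrite inE; apply/andP; split; apply: imset_f.
  move=> [/subsetP HC /andP [HA HB]]; rewrite !setD_eq0 in HA HB; split; rewrite eqEsubset ?HA ?HB andbT.
    by apply/subsetP => a /imsetP [c Hc ->]; have := HC c Hc; rewrite inE => /andP[].
  by apply/subsetP => a /imsetP [c Hc ->]; have := HC c Hc; rewrite inE => /andP[].
rewrite big_mkcondr /=.
rewrite (eq_bigr (fun C : {set T1 * T2} => \sum_(A' : {set T1} | A' \subset A :\: fst @: C)
          \sum_(B' : {set T2} | B' \subset B :\: snd @: C)
          (-1) ^+ #|C| * ((-1) ^+ #|A'| * (-1) ^+ #|B'|))); last first.
  move=> C _.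
  rewrite (eq_bigr (fun A' : {set T1} => \sum_(B' : {set T2} | B' \subset B :\: snd @: C)
          ((-1) ^+ #|C| * (-1) ^+ #|A'|) * (-1) ^+ #|B'|)); last first.
    by move=> A' _; apply: eq_bigr => B' _; rewrite mulrA.
  rewrite sum_prod2 -big_distrr /= !sum_subset_sign.
  by case: (_ == set0); case: (_ == set0); rewrite /= ?mulr1 ?mulr0.
rewrite (@sum3_swap _ _ _ _ _ _ (fun A' : {set T1} => A' \subset A) (fun B' : {set T2} => B' \subset B)
   (fun (A' : {set T1}) (B' : {set T2}) (C : {set T1 * T2}) => C \subset setX (A :\: A') (B :\: B'))); last first.
  move=> C A' B'; apply/and3P/and3P.
    move=> [/subsetP HC HA HB]; split.
    - by apply: subset_trans HA (subsetDl _ _).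
    - by apply: subset_trans HB (subsetDl _ _).
    apply/subsetP => c Hc; have := HC c Hc; rewrite !inE => /andP[-> ->].
    rewrite !andbT; apply/andP; split; apply/negP => H.
      by have := subsetP HA _ H; rewrite inE (imset_f _ Hc).
    by have := subsetP HB _ H; rewrite inE (imset_f _ Hc).
  move=> [HA HB /subsetP HC]; split.
  - by apply/subsetP => c Hc; have := HC c Hc; rewrite !inE => /andP[/andP[_ ->] /andP[_ ->]].
  - apply/subsetP => a Ha; rewrite inE (subsetP HA _ Ha) andbT; apply/imsetP => -[c Hc Ec].
    by have := HC c Hc; rewrite !inE -Ec Ha.
  - apply/subsetP => a Ha; rewrite inE (subsetP HB _ Ha) andbT; apply/imsetP => -[c Hc Ec].
    by have := HC c Hc; rewrite !inE -Ec Ha andbF.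
rewrite (eq_bigr (fun A' : {set T1} => \sum_(B' : {set T2} | B' \subset B)
   (((-1) ^+ #|A'| * (A \subset A')%:R) * (-1) ^+ #|B'|
 + (-1) ^+ #|A'| * ((-1) ^+ #|B'| * (B \subset B')%:R)
 - ((-1) ^+ #|A'| * (A \subset A')%:R) * ((-1) ^+ #|B'| * (B \subset B')%:R)))); last first.
  move=> A' HA'; apply: eq_bigr => B' HB'.
  rewrite -big_distrl /= sum_subset_sign setX_eq0 !setD_eq0.
  by case: (A \subset A'); case: (B \subset B'); rewrite /=; ring.
under eq_bigr => A' _ do rewrite sumrB big_split /=.
rewrite sumrB big_split /= !sum_prod2 !sum_subset_top.
rewrite !sum_subset_sign (negbTE nA) (negbTE nB) /=.
by rewrite mulr0 mul0r !add0r.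
Qed.

Lemma tperm_imset (T : finType) (A : {set T}) a b : a \in A -> b \in A ->
  tperm a b @: A = A.
Proof.
move=> Ha Hb; apply/eqP; rewrite eqEcard card_imset ?leqnn ?andbT; last exact: perm_inj.
by apply/subsetP => _ /imsetP [c Hc ->]; case: tpermP => // ->.
Qed.

Lemma tperm_imset_eq (T : finType) (A X : {set T}) a b : a \in A -> b \in A ->
  (tperm a b @: X == A) = (X == A).
Proof.
move=> Ha Hb; apply/eqP/eqP => [H|->]; last exact: tperm_imset.
have <- : tperm a b @: (tperm a b @: X) = X.
  by rewrite -imset_comp (eq_imset _ (tpermK a b)) imset_id.
by rewrite H tperm_imset.
Qed.

Definition surjC (T1 T2 : finType) (A : {set T1}) (B : {set T2}) (C : {set T1 * T2}) :=
  (fst @: C == A) && (snd @: C == B).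

Lemma surj_sym (T1 T2 : finType) (A : {set T1}) (B : {set T2}) (p q : T1 * T2)
  (F : nat -> rat) : p \in setX A B -> q \in setX A B ->
  \sum_(C | surjC A B C && (p \in C)) F #|C| = \sum_(C | surjC A B C && (q \in C)) F #|C|.
Proof.
rewrite !inE => /andP[p1 p2] /andP[q1 q2].
pose s := fun r : T1 * T2 => (tperm p.1 q.1 r.1, tperm p.2 q.2 r.2).
have sK : involutive s by move=> [r1 r2]; rewrite /s /= !tpermK.
have sinj : injective s := inv_inj sK.
have hK : involutive (fun C : {set T1 * T2} => s @: C).
  by move=> C; rewrite -imset_comp (eq_imset _ sK) imset_id.
rewrite (reindex_inj (inv_inj hK)) /=.
apply: eq_big => [C|C _]; last by rewrite card_imset.
have Hp : s q = p by rewrite /s !tpermR; case: (p).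
rewrite -{1}Hp mem_imset //; congr (_ && _).
have E1 : fst @: (s @: C) = tperm p.1 q.1 @: (fst @: C).
  by rewrite -!imset_comp; apply: eq_imset.
have E2 : snd @: (s @: C) = tperm p.2 q.2 @: (snd @: C).
  by rewrite -!imset_comp; apply: eq_imset.
by rewrite /surjC E1 E2 !tperm_imset_eq.
Qed.

Lemma surj_point (T1 T2 : finType) (A : {set T1}) (B : {set T2}) (p : T1 * T2) :
  p \in setX A B ->
  \sum_(C | surjC A B C && (p \in C)) (-1 : rat) ^+ (#|C|.+1) / #|C|%:R
  = ((-1) ^+ (#|A|.+1) / #|A|%:R) * ((-1) ^+ (#|B|.+1) / #|B|%:R).
Proof.
move=> Hp.
have /andP [pA pB] : (p.1 \in A) && (p.2 \in B) by rewrite inE in Hp.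
have nA : A != set0 by apply/set0Pn; exists p.1.
have nB : B != set0 by apply/set0Pn; exists p.2.
set S := \sum_(C | _) _.
have key : S *+ #|setX A B| = (-1) ^+ #|A| * (-1) ^+ #|B|.
  rewrite -sumr_const.
  rewrite (eq_bigr (fun q => \sum_(C | surjC A B C && (q \in C)) (-1 : rat) ^+ (#|C|.+1) / #|C|%:R)); last first.
    by move=> q Hq; exact: (surj_sym (fun n => (-1 : rat) ^+ n.+1 / n%:R) Hp Hq).
  rewrite (exchange_big_dep (surjC A B)) /=; last by move=> q C _ /andP[].
  rewrite (eq_bigr (fun C : {set T1 * T2} => - (-1) ^+ #|C|)); last first.
    move=> C /andP [/eqP HA /eqP HB].
    rewrite (eq_bigl (fun q => q \in C)); last first.
      move=> q /=; rewrite /surjC HA HB !eqxx /=; apply/andP/idP => [[] //|Hq]; split => //.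
      by rewrite inE -HA -HB !imset_f.
    rewrite sumr_const -(mulr_natr ((-1:rat) ^+ #|C|.+1 / #|C|%:R)) divfK; first by rewrite exprS mulN1r.
    rewrite pnatr_eq0 cards_eq0; apply/eqP => C0.
    by move: nA; rewrite -HA C0 imset0 eqxx.
  by rewrite sumrN surj_sum // opprK.
have a0 : #|A|%:R != 0 :> rat by rewrite pnatr_eq0 cards_eq0.
have b0 : #|B|%:R != 0 :> rat by rewrite pnatr_eq0 cards_eq0.
move: key; rewrite cardsX -mulr_natr natrM => key.
have -> : S = (-1) ^+ #|A| * (-1) ^+ #|B| / (#|A|%:R * #|B|%:R).
  by rewrite -key mulfK // mulf_neq0.
rewrite !exprS; field.
by rewrite a0 b0.
Qed.


Lemma cliqueP (T : finType) (e : rel T) (A : {set T}) :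
  reflect (forall u v, u \in A -> v \in A -> u != v -> e u v) (is_clique e A).
Proof.
apply: (iffP forallP) => [H u v Hu Hv Huv | H u].
  by have := H u; rewrite Hu /= => /forallP /(_ v); rewrite Hv Huv.
apply/implyP => Hu; apply/forallP => v; apply/implyP => Hv; apply/implyP.
exact: H.
Qed.

Lemma sphere_sum (T : finType) (e : rel T) (x : T) (G : simple_graph e) :
  \sum_(A : {set {y : T | e x y}} | is_clique (@sphere_rel T e x) A)
      (-1 : rat) ^+ #|A| / (#|A|.+1)%:R
  = \sum_(C : {set T} | is_clique e C && (x \in C)) (-1 : rat) ^+ (#|C|.+1) / #|C|%:R.
Proof.
case: G => esym eirr.
pose h := fun A : {set {y : T | e x y}} => x |: [set val a | a in A].
pose h' := fun C : {set T} => [set a : sig (fun y => e x y) | val a \in C].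
have hK : forall A, h' (h A) = A.
  move=> A; apply/setP => a; rewrite /h /h' !inE mem_imset; last exact: val_inj.
  case: (eqVneq (val a) x) => [Ea|] //=.
  by have := valP a; rewrite Ea eirr.
have cardh : forall A, #|h A| = #|A|.+1.
  move=> A; rewrite /h cardsU1 card_imset; last exact: val_inj.
  suff -> : x \notin [set val a | a in A] by [].
  apply/imsetP => -[a _ Ea]; by have := valP a; rewrite -Ea eirr.
rewrite (reindex_onto h h'); last first.
  move=> C /andP [/cliqueP HC HxC]; apply/setP => c; rewrite /h /h' !inE.
  case: (eqVneq c x) => [->|Hcx] //=.
  apply/imsetP/idP => [[a] | Hc].
    by rewrite inE => Ha ->.
  have Hec : e x c by apply: HC => //; rewrite eq_sym.
  by exists (exist _ c Hec); rewrite ?inE.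
apply: eq_big => [A|A _]; last first.
  by rewrite cardh !exprS mulN1r mulN1r opprK.
rewrite hK eqxx andbT /h setU11 andbT.
apply/cliqueP/cliqueP => [H u v | H u v Hu Hv Huv]; last first.
  by rewrite /sphere_rel; apply: H; rewrite ?inE ?mem_imset ?Hu ?Hv ?orbT ?(inj_eq val_inj) //; exact: val_inj.
rewrite !inE => /orP [/eqP -> | /imsetP [a Ha ->]] /orP [/eqP -> | /imsetP [b Hb ->]].
- by rewrite eqxx.
- by move=> _; apply: (valP b).
- by move=> _; rewrite esym; apply: (valP a).
- move=> Hab; apply: (H a b Ha Hb); apply: contraNneq Hab => ->; done.
Qed.

Lemma int_gf_sum (S : finType) (r : rel S) :
  int_simplex_gf r = \sum_(A : {set S} | is_clique r A) (-1 : rat) ^+ #|A| / (#|A|.+1)%:R.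
Proof.
rewrite (partition_big (fun A : {set S} => (inord #|A| : 'I_#|S|.+1)) xpredT) //=.
rewrite big_ord_recl /int_simplex_gf; congr (_ + _).
  rewrite (big_pred1 set0); first by rewrite cards0 expr0 div1r invr1.
  move=> A /=; apply/andP/eqP => [[_ /eqP H]|->].
    apply/eqP; rewrite -cards_eq0.
    by have := congr1 val H; rewrite /= inordK ?ltnS ?max_card // => ->.
  split; first by apply/cliqueP => u v; rewrite inE.
  by rewrite cards0; apply/eqP/val_inj; rewrite /= inordK.
apply: eq_bigr => k _.
rewrite (eq_bigl (fun A : {set S} => A \in [set A : {set S} | is_clique r A && (#|A| == k.+1)])); last first.
  move=> A; rewrite inE -(inj_eq val_inj) /= inordK ?ltnS ?max_card //.
rewrite (eq_bigr (fun _ => (-1 : rat) ^+ k.+1 / (k.+2)%:R)); last first.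
  by move=> A; rewrite inE => /andP [_ /eqP ->].
by rewrite sumr_const /fk -[RHS]mulr_natl; ring.
Qed.

Lemma curvatureE (T : finType) (e : rel T) (x : T) (G : simple_graph e) :
  curvature e x = \sum_(C : {set T} | is_clique e C && (x \in C)) (-1 : rat) ^+ (#|C|.+1) / #|C|%:R.
Proof. by rewrite /curvature int_gf_sum sphere_sum. Qed.

Lemma strong_simple (T1 T2 : finType) (e1 : rel T1) (e2 : rel T2) :
  simple_graph e1 -> simple_graph e2 -> simple_graph (strong_prod e1 e2).
Proof.
move=> [s1 i1] [s2 i2]; split.
  by move=> a b; rewrite /strong_prod eq_sym s1 s2 (eq_sym a.1) (eq_sym a.2).
by move=> a; rewrite /strong_prod eqxx.
Qed.

Lemma strong_clique (T1 T2 : finType) (e1 : rel T1) (e2 : rel T2) (C : {set T1 * T2}) :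
  is_clique (strong_prod e1 e2) C = is_clique e1 (fst @: C) && is_clique e2 (snd @: C).
Proof.
apply/cliqueP/andP => [H | [/cliqueP H1 /cliqueP H2]].
  split; apply/cliqueP => _ _ /imsetP [c Hc ->] /imsetP [d Hd ->] Hcd.
    have Hne : c != d by apply: contraNneq Hcd => ->.
    by have := H c d Hc Hd Hne; rewrite /strong_prod => /and3P [_ /orP [/eqP E|//] _]; rewrite E eqxx in Hcd.
  have Hne : c != d by apply: contraNneq Hcd => ->.
  by have := H c d Hc Hd Hne; rewrite /strong_prod => /and3P [_ _ /orP [/eqP E|//]]; rewrite E eqxx in Hcd.
move=> u v Hu Hv Huv; rewrite /strong_prod Huv /=.
apply/andP; split.
  case: (eqVneq u.1 v.1) => //= H; apply: H1 => //; exact: imset_f.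
case: (eqVneq u.2 v.2) => //= H; apply: H2 => //; exact: imset_f.
Qed.

Theorem theorem1 (T1 T2 : finType) (e1 : rel T1) (e2 : rel T2)
  (G1 : simple_graph e1) (G2 : simple_graph e2) (x : T1) (y : T2) :
  curvature (strong_prod e1 e2) (x, y) = curvature e1 x * curvature e2 y.
Proof.
rewrite !curvatureE //; last exact: strong_simple.
rewrite -sum_prod2 pair_big_dep /=.
rewrite (partition_big (fun C : {set T1 * T2} => (fst @: C, snd @: C))
   (fun pr : {set T1} * {set T2} => (is_clique e1 pr.1 && (x \in pr.1)) &&
        (is_clique e2 pr.2 && (y \in pr.2)))) /=; last first.
  move=> C /andP []; rewrite strong_clique => /andP [-> ->] Hp.
  by rewrite !(imset_f _ Hp).
apply: eq_bigr => [[A B]] /= /andP [/andP [cA xA] /andP [cB yB]].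
rewrite -(surj_point (p := (x, y))); last by rewrite inE xA yB.
apply: eq_bigl => C; rewrite xpair_eqE /surjC strong_clique.
case: (fst @: C =P A) => [->|] /=; last by rewrite !andbF.
case: (snd @: C =P B) => [->|] /=; last by rewrite !andbF.
by rewrite cA cB andbT.
Qed.
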